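(* Let $m$ be a positive integer and let $a_1,\dots,a_m$ be distinct nonnegative integers; set $a_0=a_m$ and $a_{m+1}=a_1$. Let $\alpha=|\{i\in\{1,\dots,m\}: a_{i-1}<a_i>a_{i+1}\}|$. Then (i) $\sum_{i=1}^m\max\{a_i,a_{i+1}\}\ge\sum_{i=1}^m a_i+\max\{a_1,\dots,a_m\}-\min\{a_1,\dots,a_m\}+(\alpha-1)$; (ii) $\sum_{i=0}^{m-1}|a_i-a_{i+1}|\ge 2(m-1)+2(\alpha-1)\ge 2(m-1)$. *)

(* Defs.v *)
From mathcomp Require Import all_boot all_order all_algebra.
Set Implicit Arguments. Unset Strict Implicit. Unset Printing Implicit Defensive.
Import Order.TTheory GRing.Theory Num.Theory.

(* The sequence a_1,...,a_m is given as a : nat -> nat, only the values at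
   indices 1..m matter.  [cyc a m i] is the cyclically extended sequence:
   a_0 := a_m, a_{m+1} := a_1, a_i otherwise. *)
Definition cyc (a : nat -> nat) (m i : nat) : nat :=
  if i == 0 then a m else if i == m.+1 then a 1 else a i.

Definition npeaks (a : nat -> nat) (m : nat) : nat :=
  count (fun i => (cyc a m i.-1 < cyc a m i) && (cyc a m i.+1 < cyc a m i))
        (iota 1 m).

Definition amax (a : nat -> nat) (m : nat) : nat := \max_(1 <= i < m.+1) a i.
Definition amin (a : nat -> nat) (m : nat) : nat :=
  \big[minn/a 1]_(1 <= i < m.+1) a i.

(* Main.v *)
Require Import Defs.
From mathcomp Require Import all_boot all_order all_algebra zify.
Import Order.TTheory GRing.Theory Num.Theory.
Set Implicit Arguments.


Lemma sum_interval (x y M : nat) :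
  (\sum_(0 <= t < M) ((x <= t) && (t < y)) = minn y M - minn x M)%N.
Proof.
elim: M => [|M IH]; first by rewrite big_nil; lia.
rewrite big_nat_recr //= IH.
case: (leqP x M) => hx; case: (ltnP M y) => hy /=; lia.
Qed.

Lemma sum_eq1 (v M : nat) :
  (\sum_(0 <= t < M) (v == t.+1) = ((1 <= v) && (v <= M)))%N.
Proof.
elim: M => [|M IH]; first by rewrite big_nil; case: v => [|[]].
rewrite big_nat_recr //= IH.
case: (eqVneq v M.+1) => [->|hv] /=; first by rewrite ?eqxx ?ltnn ?leqnn ?andbF ?andbT.
rewrite addn0; congr (nat_of_bool (_ && _)).
by rewrite [in RHS]leq_eqVlt (negbTE hv) ltnS.
Qed.

Lemma sum_count (T : Type) (P : pred T) (s : seq T) :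
  (\sum_(i <- s) (P i : nat) = count P s)%N.
Proof. by elim: s => [|x s IH]; rewrite ?big_nil ?big_cons ?IH. Qed.

Lemma count_le1 (T : eqType) (P : pred T) (s : seq T) :
  uniq s -> {in s &, forall i j, P i -> P j -> i = j} -> (count P s <= 1)%N.
Proof.
elim: s => [|x s IH] //= /andP[xs us] H.
case Px: (P x) => /=.
  rewrite (eq_in_count (a2 := pred0)) ?count_pred0 //.
  move=> y ys /=; apply/negbTE/negP => Py.
  have := H x y; rewrite !inE eqxx ys orbT => /(_ isT isT Px Py) e.
  by move: xs; rewrite e ys.
apply: IH => // i j iS jS; apply: H; by rewrite inE ?iS ?jS orbT.
Qed.

Lemma count_ge2 (T : eqType) (P : pred T) (s : seq T) k1 k2 :
  k1 != k2 -> k1 \in s -> k2 \in s -> P k1 -> P k2 -> (2 <= count P s)%N.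
Proof.
move=> ne; elim: s => [|x s IH] //=; rewrite !inE => h1 h2 p1 p2.
case: (eqVneq k1 x) h1 => [e1 _|n1 /= h1].
  subst x.
  have k2s : k2 \in s.
    move: h2 => /orP[/eqP e|//]; by rewrite e eqxx in ne.
  rewrite p1 add1n ltnS -has_count; apply/hasP; by exists k2.
case: (eqVneq k2 x) h2 => [e2 _|n2 /= h2].
  subst x.
  rewrite p2 add1n ltnS -has_count; apply/hasP; by exists k1.
by have := IH h1 h2 p1 p2; lia.
Qed.

Lemma walk (h : nat -> bool) j l : (j <= l)%N -> ~~ h j -> h l ->
  exists k, [/\ (j <= k < l)%N, ~~ h k & h k.+1].
Proof.
elim: l => [|l IH]; first by rewrite leqn0 => /eqP -> /negbTE ->.
rewrite leq_eqVlt ltnS => /orP[/eqP -> /negbTE ->//|jl] hj hl.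
case hl': (h l).
  have [k [kr hk hk1]] := IH jl hj hl'; exists k; split => //; lia.
exists l; split => //; first lia; by rewrite hl'.
Qed.

Lemma amax_attain a m : (0 < m)%N ->
  (exists2 i, (1 <= i <= m)%N & a i = amax a m) /\
  forall i, (1 <= i <= m)%N -> (a i <= amax a m)%N.
Proof.
rewrite /amax; elim: m => [//|m IH] _.
rewrite big_nat_recr //=.
case: (posnP m) => [->|mp].
  rewrite big_nil max0n; split; first by exists 1.
  by move=> i; rewrite -eqn_leq => /eqP <-.
have [[i ir ei] H] := IH mp.
case: (leqP (\max_(1 <= i < m.+1) a i) (a m.+1)) => hc.
  split; first by exists m.+1 => //; lia.
  move=> k kr; case: (eqVneq k m.+1) => [->//|kn].
  apply: leq_trans (H k _) hc; lia.
split; first by exists i => //; lia.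
move=> k kr; case: (eqVneq k m.+1) => [->|kn]; first exact: ltnW.
apply: H; lia.
Qed.

Lemma bigmin_seq (F : nat -> nat) x0 (s : seq nat) :
  (\big[minn/x0]_(i <- s) F i = x0 \/ exists2 i, i \in s & \big[minn/x0]_(i <- s) F i = F i)
  /\ (\big[minn/x0]_(i <- s) F i <= x0)%N
  /\ forall i, i \in s -> (\big[minn/x0]_(i <- s) F i <= F i)%N.
Proof.
elim: s => [|x s [IH1 [IH2 IH3]]]; first by rewrite big_nil; split; [left|split].
rewrite big_cons; split; last split.
- case: (leqP (F x) (\big[minn/x0]_(i <- s) F i)) => h.
    by right; exists x; rewrite ?inE ?eqxx.
  case: IH1 => [e|[i ii e]]; [by left | right; exists i => //; by rewrite inE ii orbT].
- by rewrite geq_min IH2 orbT.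
- move=> i; rewrite inE => /orP[/eqP ->|ii]; first by rewrite geq_min leqnn.
  by rewrite geq_min IH3 ?orbT.
Qed.

Lemma amin_attain a m : (0 < m)%N ->
  (exists2 i, (1 <= i <= m)%N & a i = amin a m) /\
  forall i, (1 <= i <= m)%N -> (amin a m <= a i)%N.
Proof.
move=> mp; rewrite /amin.
have [H1 [H2 H3]] := bigmin_seq a (a 1) (index_iota 1 m.+1).
split.
  case: H1 => [->|[i ii ->]]; first by exists 1 => //; lia.
  by exists i => //; move: ii; rewrite mem_index_iota.
by move=> i ir; apply: H3; rewrite mem_index_iota; lia.
Qed.

Lemma cycE a m i : (1 <= i <= m)%N -> cyc a m i = a i.
Proof. rewrite /cyc => h; case: eqP => [e|_]; first lia; case: eqP => //; lia. Qed.
Lemma cyc0 a m : cyc a m 0 = a m.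
Proof. by []. Qed.
Lemma cycS a m : cyc a m m.+1 = a 1.
Proof. by rewrite /cyc eqxx. Qed.

Lemma up1 a m (hm : (0 < m)%N) t : (amin a m <= t < amax a m)%N ->
  (1 <= count (fun k => (cyc a m k <= t) && (t < cyc a m k.+1)) (iota 1 m))%N.
Proof.
move=> /andP[h1 h2].
have [[imin ir emin] Hmin] := @amin_attain a m hm.
have [[imax ir' emax] Hmax] := @amax_attain a m hm.
suff [k [kr hk hk1]] : exists k, [/\ (1 <= k <= m)%N, ~~ (t < cyc a m k) & (t < cyc a m k.+1)%N].
  rewrite -has_count; apply/hasP; exists k; first by rewrite mem_iota; lia.
  by rewrite /= leqNgt hk.
have cmin : ~~ (t < cyc a m imin)%N by rewrite cycE // emin -leqNgt.
have cmax : (t < cyc a m imax)%N by rewrite cycE // emax.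
case: (leqP imin imax) => hle.
  have [k [kr hk hk1]] := @walk (fun k => t < cyc a m k) _ _ hle cmin cmax.
  exists k; split => //; lia.
case h1c: (t < cyc a m 1)%N.
  have hm1 : (t < cyc a m m.+1)%N by rewrite cycS -(@cycE a m 1) //; lia.
  have le1 : (imin <= m.+1)%N by lia.
  have [k [kr hk hk1]] := @walk (fun k => t < cyc a m k) _ _ le1 cmin hm1.
  exists k; split => //; lia.
have le1 : (1 <= imax)%N by lia.
have [k [kr hk hk1]] := @walk (fun k => t < cyc a m k) _ _ le1 (negbT h1c) cmax.
exists k; split => //; lia.
Qed.

Lemma up2 a m (hm : (0 < m)%N)
  (hdist : forall i j, (1 <= i <= m)%N -> (1 <= j <= m)%N -> a i = a j -> i = j) t i :
  (1 <= i <= m)%N -> (cyc a m i.-1 < cyc a m i)%N -> (cyc a m i.+1 < cyc a m i)%N ->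
  cyc a m i = t.+1 -> cyc a m i != amax a m ->
  (2 <= count (fun k => (cyc a m k <= t) && (t < cyc a m k.+1)) (iota 1 m))%N.
Proof.
move=> ir hl hr ct nm.
have [[imax ir' emax] Hmax] := @amax_attain a m hm.
have ai : cyc a m i = a i by rewrite cycE.
have ltmax : (t.+1 < amax a m)%N.
  rewrite -ct ltn_neqAle nm /= ai; exact: Hmax.
have nimax : imax != i.
  apply/eqP => e; move: nm; by rewrite ai -e emax eqxx.
set k0 := if i == 1 then m else i.-1.
have k0r : (1 <= k0 <= m)%N by rewrite /k0; case: ifP => /eqP; lia.
have up0 : (cyc a m k0 <= t) && (t < cyc a m k0.+1).
  rewrite /k0; case: ifP => /eqP e.
    subst i; move: hl; rewrite /= cyc0 cycS -(@cycE a m m) ?ct; last lia.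
    by move=> h; apply/andP; split; lia.
  have e2 : i.-1.+1 = i by lia.
  rewrite e2 ct; apply/andP; split; lia.
suff [k [kr hk hk1 kn]] : exists k, [/\ (1 <= k <= m)%N, ~~ (t < cyc a m k),
    (t < cyc a m k.+1)%N & k != k0].
  apply: (@count_ge2 _ _ _ k0 k); rewrite ?mem_iota //; try lia.
have hi1 : ~~ (t < cyc a m i.+1)%N by rewrite -leqNgt -ltnS -ct.
have cmax : (t < cyc a m imax)%N by rewrite cycE // emax; lia.
case: (ltnP i imax) => hle.
  have le1 : (i.+1 <= imax)%N by lia.
  have [k [kr hk hk1]] := @walk (fun k => t < cyc a m k) _ _ le1 hi1 cmax.
  exists k; split => //; first lia.
  rewrite /k0; case: ifP => /eqP; lia.
have i1 : (i == 1) = false by apply/negbTE; lia.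
have ek0 : k0 = i.-1 by rewrite /k0 i1.
rewrite ek0.
case h1c: (t < cyc a m 1)%N.
  have hm1 : (t < cyc a m m.+1)%N by rewrite cycS -(@cycE a m 1) //; lia.
  have le1 : (i.+1 <= m.+1)%N by lia.
  have [k [kr hk hk1]] := @walk (fun k => t < cyc a m k) _ _ le1 hi1 hm1.
  exists k; split => //; lia.
have le1 : (1 <= imax)%N by lia.
have [k [kr hk hk1]] := @walk (fun k => t < cyc a m k) _ _ le1 (negbT h1c) cmax.
exists k; split => //; lia.
Qed.

Lemma c_range a m i : (0 < m)%N -> (i <= m.+1)%N ->
  exists2 j, (1 <= j <= m)%N & cyc a m i = a j.
Proof.
move=> hm hi; case: (posnP i) => [->|ip]; first by exists m => //; lia.
case: (eqVneq i m.+1) => [->|ne]; first by rewrite cycS; exists 1 => //; lia.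
by exists i; [lia | rewrite cycE //; lia].
Qed.

Lemma iotaE m : index_iota 1 m.+1 = iota 1 m.
Proof. by rewrite /index_iota subn1. Qed.

Lemma mainD a m (hm : (0 < m)%N)
  (hdist : forall i j, (1 <= i <= m)%N -> (1 <= j <= m)%N -> a i = a j -> i = j) :
  (amax a m - amin a m + npeaks a m <=
     \sum_(1 <= k < m.+1) (cyc a m k.+1 - cyc a m k) + 1)%N.
Proof.
set M := amax a m.
have [[imax ir' emax] Hmax] := @amax_attain a m hm.
have [[imin ir emin] Hmin] := @amin_attain a m hm.
have cle : forall k, (k <= m.+1)%N -> (cyc a m k <= M)%N.
  by move=> k kr; have [j jr ->] := @c_range a m k hm kr; apply: Hmax.
set U := fun t => count (fun k => (cyc a m k <= t) && (t < cyc a m k.+1)) (iota 1 m).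
set pk := fun i => (cyc a m i.-1 < cyc a m i) && (cyc a m i.+1 < cyc a m i).
set PS := fun t => count (fun i => pk i && (cyc a m i != M) && (cyc a m i == t.+1)) (iota 1 m).
have ED : \sum_(1 <= k < m.+1) (cyc a m k.+1 - cyc a m k) = \sum_(0 <= t < M) U t.
  rewrite (eq_big_nat _ _ (F2 := fun k => \sum_(0 <= t < M) ((cyc a m k <= t) && (t < cyc a m k.+1)))); last first.
    move=> k kr; rewrite sum_interval (minn_idPl (cle _ _)) ?(minn_idPl (cle _ _)) //; lia.
  rewrite exchange_big; apply: eq_bigr => t _.
  by rewrite iotaE sum_count.
have pw : forall t, (t < M)%N -> ((amin a m <= t) && (t < M) + PS t <= U t)%N.
  move=> t tM.
  have PS1 : (PS t <= 1)%N.
    apply: count_le1; first exact: iota_uniq.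
    move=> i j; rewrite !mem_iota => ii jj /andP[_ /eqP ei] /andP[_ /eqP ej].
    apply: hdist; try lia.
    by rewrite -(@cycE a m i); [rewrite -(@cycE a m j); [rewrite ei ej|] |]; lia.
  case: (posnP (PS t)) => [->|pos].
    rewrite addn0; case: (leqP (amin a m) t) => h //=.
    by rewrite tM; apply: up1 => //; apply/andP; split.
  move: pos; rewrite -has_count => /hasP[i]; rewrite mem_iota => ii /andP[/andP[/andP[hl hr] nm] /eqP ct].
  have := @up2 a m hm hdist t i _ hl hr ct nm.
  move=> H2; have H3 := H2 ltac:(lia); have := leq_b1 ((amin a m <= t) && (t < M)); rewrite /U; lia.
have ES : \sum_(0 <= t < M) PS t = count (fun i => pk i && (cyc a m i != M)) (iota 1 m).
  rewrite -sum_count /PS.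
  under eq_bigr do rewrite -sum_count.
  rewrite exchange_big big_seq [RHS]big_seq; apply: eq_bigr => i; rewrite mem_iota => ii.
  case pki: (pk i && (cyc a m i != M)) => /=.
    under eq_bigr do rewrite /=.
    rewrite sum_eq1.
    have : (cyc a m i <= M)%N by apply: cle; lia.
    move: pki => /andP[/andP[hl _] _] => h.
    by rewrite (_ : (1 <= cyc a m i)%N) ?h //; lia.
  by rewrite big1.
have Emin : \sum_(0 <= t < M) ((amin a m <= t) && (t < M)) = M - amin a m.
  by rewrite sum_interval minnn; have := Hmin imin ir; rewrite emin; lia.
have NP : (npeaks a m <= count (fun i => pk i && (cyc a m i != M)) (iota 1 m) + 1)%N.
  have C1 : (count (fun i => cyc a m i == M) (iota 1 m) <= 1)%N.
    apply: count_le1; first exact: iota_uniq.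
    move=> i j; rewrite !mem_iota => ii jj /eqP ei /eqP ej.
    apply: hdist; try lia.
    by rewrite -(@cycE a m i); [rewrite -(@cycE a m j); [rewrite ei ej|] |]; lia.
  apply: leq_trans (leq_add (leqnn _) C1).
  rewrite /npeaks -count_predUI; apply: leq_trans (leq_addr _ _).
  apply: sub_count => i /=; rewrite -/(pk i); case: (pk i) => //=.
  by case: eqP.
rewrite ED.
have : (\sum_(0 <= t < M) ((amin a m <= t) && (t < M) + PS t) <= \sum_(0 <= t < M) U t)%N.
  rewrite big_seq [X in (_ <= X)%N]big_seq; apply: leq_sum => t.
  rewrite mem_index_iota => tr; apply: pw; lia.
rewrite big_split /= Emin ES; lia.
Qed.

Unset Implicit Arguments.
Local Open Scope ring_scope.

Lemma PoszS (I : Type) (s : seq I) (F : I -> nat) :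
  \sum_(i <- s) (F i)%:Z = (\sum_(i <- s) F i)%N%:Z.
Proof. by elim: s => [|x s IH]; rewrite ?big_nil ?big_cons ?IH ?PoszD. Qed.

Lemma t2 (x y : nat) : `|x%:Z - y%:Z| = ((x - y) + (y - x))%N%:Z.
Proof.
case: (leqP x y) => h.
  rewrite ler0_norm ?subr_le0 //; lia.
rewrite gtr0_norm ?subr_gt0 //; lia.
Qed.

Theorem lemma5p1 (m : nat) (a : nat -> nat) (hm : (0 < m)%N)
  (hdist : forall i j, (1 <= i <= m)%N -> (1 <= j <= m)%N -> a i = a j -> i = j) :
  (* (i) *)
  ((\sum_(1 <= i < m.+1) (maxn (cyc a m i) (cyc a m i.+1))%:Z : int)
     >= (\sum_(1 <= i < m.+1) (a i)%:Z) + (amax a m)%:Z - (amin a m)%:Z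
        + ((npeaks a m)%:Z - 1))
  /\
  (* (ii) *)
  ((\sum_(0 <= i < m) `|(cyc a m i)%:Z - (cyc a m i.+1)%:Z| : int)
     >= 2 * (m%:Z - 1) + 2 * ((npeaks a m)%:Z - 1)
   /\ (\sum_(0 <= i < m) `|(cyc a m i)%:Z - (cyc a m i.+1)%:Z| : int)
     >= 2 * (m%:Z - 1)
   /\ ((1 < m)%N -> 2 * (m%:Z - 1) + 2 * ((npeaks a m)%:Z - 1) >= 2 * (m%:Z - 1))).
Proof.
have HD := @mainD a m hm hdist.
set D := (\sum_(1 <= k < m.+1) (cyc a m k.+1 - cyc a m k))%N in HD.
set Dd := (\sum_(1 <= k < m.+1) (cyc a m k - cyc a m k.+1))%N.
have [[imax ir' emax] Hmax] := @amax_attain a m hm.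
have [[imin ir emin] Hmin] := @amin_attain a m hm.
have E1 : (\sum_(1 <= i < m.+1) maxn (cyc a m i) (cyc a m i.+1) =
           \sum_(1 <= i < m.+1) a i + D)%N.
  under eq_bigr do rewrite maxnE.
  rewrite big_split /=; congr (_ + _)%N.
  apply: eq_big_nat => i ir0; rewrite cycE //; lia.
have E2 : (\sum_(1 <= i < m.+1) maxn (cyc a m i) (cyc a m i.+1) =
           \sum_(1 <= i < m.+1) cyc a m i.+1 + Dd)%N.
  under eq_bigr do rewrite maxnC maxnE.
  by rewrite big_split.
have E3 : (\sum_(1 <= i < m.+1) cyc a m i.+1 = \sum_(1 <= i < m.+1) cyc a m i)%N.
  case: m hm {hdist HD D Dd E1 E2 ir' ir Hmax Hmin emax emin} => [//|m'] hm.
  rewrite [LHS]big_nat_recr // [RHS]big_nat_recl // cycS -(@cycE a m'.+1 1) //; exact: addnC.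
have E4 : (\sum_(0 <= i < m) ((cyc a m i - cyc a m i.+1) + (cyc a m i.+1 - cyc a m i)) = Dd + D)%N.
  rewrite /Dd /D -big_split /=.
  case: m hm {hdist HD D Dd E1 E2 ir' ir Hmax Hmin emax emin E3} => [//|m'] hm.
  rewrite big_ltn // [RHS]big_nat_recr //=.
  rewrite cyc0 cycS -(@cycE a m'.+1 1) // -(@cycE a m'.+1 m'.+1) //; lia.
have E5 : (\sum_(1 <= i < m.+1) cyc a m i = \sum_(1 <= i < m.+1) a i)%N.
  apply: eq_big_nat => i ir0; rewrite cycE //; lia.
have DD : D = Dd by lia.
have MM : (m <= amax a m - amin a m + 1)%N.
  have U : uniq (map a (iota 1 m)).
    rewrite map_inj_in_uniq ?iota_uniq // => i j; rewrite !mem_iota => ii jj.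
    apply: hdist; lia.
  have := uniq_leq_size U (s2 := iota (amin a m) (amax a m - amin a m + 1)).
  rewrite size_map size_iota size_iota; apply => x /mapP[i]; rewrite !mem_iota => ii ->.
  have := Hmin i ltac:(lia); have := Hmax i ltac:(lia); lia.
have AP : (1 < m)%N -> (1 <= npeaks a m)%N.
  move=> m2; rewrite /npeaks -has_count; apply/hasP; exists imax; first by rewrite mem_iota; lia.
  have [jl jlr ejl] := @c_range a m imax.-1 hm ltac:(lia).
  have [jr jrr ejr] := @c_range a m imax.+1 hm ltac:(lia).
  rewrite ejl ejr cycE // emax.
  have nl : jl != imax.
    apply/eqP => e; subst jl; move: ejl; case: (posnP imax) => [h|h]; first lia.
    case: (eqVneq imax 1) => [e1|n1].
      by rewrite e1 /= cyc0; move=> /(hdist _ _ _ _) => /(_ ltac:(lia) ltac:(lia)); lia.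
    rewrite cycE; last lia.
    by move=> /(hdist _ _ _ _) => /(_ ltac:(lia) ltac:(lia)); lia.
  have nr : jr != imax.
    apply/eqP => e; subst jr; move: ejr.
    case: (eqVneq imax m) => [e1|n1].
      by rewrite e1 cycS; move=> /(hdist _ _ _ _) => /(_ ltac:(lia) ltac:(lia)); lia.
    rewrite cycE; last lia.
    by move=> /(hdist _ _ _ _) => /(_ ltac:(lia) ltac:(lia)); lia.
  have h1 : a jl != a imax by apply/eqP => /(hdist _ _ jlr ir'); apply/eqP.
  have h2 : a jr != a imax by apply/eqP => /(hdist _ _ jrr ir'); apply/eqP.
  have := Hmax jl jlr; have := Hmax jr jrr.
  rewrite -emax => l1 l2; apply/andP; split; rewrite ltn_neqAle ?h1 ?h2 //.
have Hle : (amin a m <= amax a m)%N.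
  have := Hmin imax ir'; rewrite emax //.
have E6 : \sum_(0 <= i < m) `|(cyc a m i)%:Z - (cyc a m i.+1)%:Z| = (Dd + D)%N%:Z.
  under eq_bigr do rewrite t2.
  by rewrite PoszS E4.
rewrite E6 !PoszS E1.
split; first lia.
split; first lia.
split; last lia.
case: (ltnP 1 m) => m2; first by have := AP m2; lia.
lia.
Qed.
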